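(* Let $\mathcal{A}\subseteq M_2(\mathbb{C})$ be the algebra of upper triangular $2\times 2$ matrices $\begin{pmatrix}\alpha&\beta\\0&\gamma\end{pmatrix}$, and for $c\in\mathbb{C}\setminus\{0\}$ let $V_c=\left\{\begin{pmatrix} y & x\\ 0 & y+cx\end{pmatrix} : x,y\in\mathbb{C}\right\}$. Then for every $c\in\mathbb{C}\setminus\{0\}$ and every $\phi\in\Phi(\mathcal{A})$, $\phi\colon\mathcal{A}\to\mathcal{B}\subseteq\mathbf{B}(\mathcal{H})$, with $\mathcal{A}_\phi = V_c$, we have $\|\phi\|\,\|\phi^{-1}\| \ge \frac{1}{|c|}$.
   Context: $\Phi(\mathcal{A})$ is the set of injective homomorphisms $\phi\colon\mathcal{A}\to\mathcal{B}$ onto an operator algebra $\mathcal{B}\subseteq\mathbf{B}(\mathcal{H})$ with $\|\phi\|_{cb}<\infty$ and $\|\phi^{-1}\|_{cb}<\infty$ (cb norms with respect to matrix norms inherited from $M_n(\mathbf{B}(\mathcal{H}))$, and the norm of $M_2(\mathbb{C})$ on $\mathcal{A}$); $\mathcal{A}_\phi=\phi^{-1}(\mathcal{B}\cap\mathcal{B}^* )$, where $\mathcal{B}^*$ is the set of adjoints of elements of $\mathcal{B}$. Here $\|\phi\|,\|\phi^{-1}\|$ are the ordinary operator norms. *)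

(* Defs.v *)
From HB Require Import structures.
From mathcomp Require Import all_boot all_order all_algebra.
From mathcomp Require Import all_classical reals.
From mathcomp Require Import complex.
Set Implicit Arguments. Unset Strict Implicit. Unset Printing Implicit Defensive.
Import Order.TTheory GRing.Theory Num.Theory.
Local Open Scope ring_scope.
Local Open Scope classical_set_scope.

Section Defs.
Variable R : realType.
Local Notation C := (R[i]).

Definition hnorm2 (H : lmodType C) (ip : H -> H -> C) (x : H) : R :=
  complex.Re (ip x x).
Definition hnorm (H : lmodType C) (ip : H -> H -> C) (x : H) : R :=
  Num.sqrt (hnorm2 ip x).

Definition is_hilbert (H : lmodType C) (ip : H -> H -> C) : Prop :=
  [/\ (forall (a : C) (x y z : H), ip (a *: x + y) z = a * ip x z + ip y z),
      (forall x y : H, ip y x = (ip x y)^*),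
      (forall x : H, 0 <= ip x x),
      (forall x : H, ip x x = 0 -> x = 0) &
      (forall u : nat -> H,
         (forall e : R, 0 < e -> exists N, forall m n, (N <= m)%N -> (N <= n)%N ->
             hnorm ip (u m - u n) < e) ->
         exists l : H, forall e : R, 0 < e -> exists N, forall n, (N <= n)%N ->
             hnorm ip (u n - l) < e)].

Definition is_bounded_op (H : lmodType C) (ip : H -> H -> C) (T : H -> H) : Prop :=
  (forall (a : C) (x y : H), T (a *: x + y) = a *: T x + T y) /\
  exists M : R, forall x, hnorm ip (T x) <= M * hnorm ip x.

Definition opmx_norm (H : lmodType C) (ip : H -> H -> C) (n : nat)
    (T : 'I_n -> 'I_n -> H -> H) : R :=
  sup [set Num.sqrt (\sum_(i < n) hnorm2 ip (\sum_(j < n) T i j (x j)))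
      | x in [set x : 'I_n -> H | \sum_(j < n) hnorm2 ip (x j) <= 1]].

Definition op_norm (H : lmodType C) (ip : H -> H -> C) (T : H -> H) : R :=
  opmx_norm ip (fun _ _ : 'I_1 => T).

Definition vnorm2 (v : 'cV[C]_2) : R := \sum_(k < 2) Normc.normc (v k 0) ^+ 2.

(* norm of an element X of M_n(M_2(C)) = M_{2n}(C), i.e. the operator norm
   for the Euclidean norm on (C^2)^n = C^{2n} *)
Definition mx2blk_norm (n : nat) (X : 'I_n -> 'I_n -> 'M[C]_2) : R :=
  sup [set Num.sqrt (\sum_(i < n) vnorm2 (\sum_(j < n) X i j *m v j))
      | v in [set v : 'I_n -> 'cV[C]_2 | \sum_(j < n) vnorm2 (v j) <= 1]].

Definition mx2_norm (a : 'M[C]_2) : R := mx2blk_norm (fun _ _ : 'I_1 => a).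

Definition upper_tri : set 'M[C]_2 := [set a | a ord_max ord0 = 0].

Definition Vc (c : C) : set 'M[C]_2 :=
  [set a | a ord_max ord0 = 0 /\ a ord_max ord_max = a ord0 ord0 + c * a ord0 ord_max].

Definition is_inj_hom (H : lmodType C) (ip : H -> H -> C)
    (phi : 'M[C]_2 -> H -> H) : Prop :=
  [/\ (forall a, upper_tri a -> is_bounded_op ip (phi a)),
      (forall (k : C) a b, upper_tri a -> upper_tri b ->
           forall x, phi (k *: a + b) x = k *: phi a x + phi b x),
      (forall a b, upper_tri a -> upper_tri b ->
           forall x, phi (a * b) x = phi a (phi b x)) &
      (forall a b, upper_tri a -> upper_tri b -> phi a = phi b -> a = b)].

Definition cb_bounded (H : lmodType C) (ip : H -> H -> C) (phi : 'M[C]_2 -> H -> H) :=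
  exists M : R, forall n (X : 'I_n -> 'I_n -> 'M[C]_2),
    (forall i j, upper_tri (X i j)) ->
    opmx_norm ip (fun i j => phi (X i j)) <= M * mx2blk_norm X.

(* ||phi^{-1}||_cb < oo  (phi^{-1} (phi_n X) = X) *)
Definition cb_inv_bounded (H : lmodType C) (ip : H -> H -> C) (phi : 'M[C]_2 -> H -> H) :=
  exists M : R, forall n (X : 'I_n -> 'I_n -> 'M[C]_2),
    (forall i j, upper_tri (X i j)) ->
    mx2blk_norm X <= M * opmx_norm ip (fun i j => phi (X i j)).

Definition in_Phi (H : lmodType C) (ip : H -> H -> C) (phi : 'M[C]_2 -> H -> H) : Prop :=
  [/\ is_inj_hom ip phi, cb_bounded ip phi & cb_inv_bounded ip phi].

Definition in_B (H : lmodType C) (phi : 'M[C]_2 -> H -> H) (T : H -> H) : Prop :=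
  exists2 a, upper_tri a & phi a = T.
Definition in_Bstar (H : lmodType C) (ip : H -> H -> C) (phi : 'M[C]_2 -> H -> H)
    (T : H -> H) : Prop :=
  exists2 S, in_B phi S & forall x y, ip (S x) y = ip x (T y).

Definition A_phi (H : lmodType C) (ip : H -> H -> C) (phi : 'M[C]_2 -> H -> H)
  : set 'M[C]_2 :=
  [set a | upper_tri a /\ in_B phi (phi a) /\ in_Bstar ip phi (phi a)].

Definition hom_norm (H : lmodType C) (ip : H -> H -> C) (phi : 'M[C]_2 -> H -> H) : R :=
  sup [set op_norm ip (phi a) | a in [set a | upper_tri a /\ mx2_norm a <= 1]].
Definition hom_inv_norm (H : lmodType C) (ip : H -> H -> C) (phi : 'M[C]_2 -> H -> H) : R :=
  sup [set mx2_norm a | a in [set a | upper_tri a /\ op_norm ip (phi a) <= 1]].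

End Defs.

(* Main.v *)
Require Import Defs.
From HB Require Import structures.
From mathcomp Require Import all_boot all_order all_algebra.
From mathcomp Require Import all_classical reals.
From mathcomp Require Import complex.
From mathcomp Require Import ring lra.
Set Implicit Arguments. Unset Strict Implicit. Unset Printing Implicit Defensive.
Import Order.TTheory GRing.Theory Num.Theory.
Local Open Scope ring_scope.
Local Open Scope classical_set_scope.

Section Hil.
Variables (R : realType) (H : lmodType R[i]) (ip : H -> H -> R[i]).

Lemma ip0l (hH : is_hilbert ip) z : ip 0 z = 0.
Proof.
case: hH => lin _ _ _ _; have := lin 1 0 0 z.
rewrite scale1r addr0 mul1r => e.
by have := congr1 (fun t => t - ip 0 z) e; rewrite subrr addrK.
Qed.

Lemma ip0r (hH : is_hilbert ip) z : ip z 0 = 0.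
Proof.
have := hH; case=> _ sym _ _ _; by rewrite sym ip0l // conjC0.
Qed.

Lemma ipDr (hH : is_hilbert ip) u v w : ip u (v + w) = ip u v + ip u w.
Proof.
have := hH; case=> lin sym _ _ _.
by rewrite [LHS]sym (sym v u) (sym w u) -{1}[v]scale1r lin mul1r rmorphD.
Qed.

Lemma ipZr (hH : is_hilbert ip) u k v : ip u (k *: v) = k^* * ip u v.
Proof.
have := hH; case=> lin sym _ _ _.
by rewrite sym (sym v u) -[k *: v]addr0 lin ip0l // addr0 rmorphM.
Qed.

Lemma ipZl (hH : is_hilbert ip) u k v : ip (k *: v) u = k * ip v u.
Proof.
have := hH; case=> lin sym _ _ _.
by rewrite -[k *: v]addr0 lin ip0l // addr0.
Qed.

Lemma ip_self_conj (hH : is_hilbert ip) x : (ip x x)^* = ip x x.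
Proof. by have := hH; case=> _ sym _ _ _; rewrite -sym. Qed.

Lemma Re_ip_ge0 (hH : is_hilbert ip) x : 0 <= complex.Re (ip x x).
Proof.
have := hH; case=> _ _ pos _ _; have := pos x.
by case: (ip x x) => a b; rewrite lecE /= => /andP[].
Qed.

Lemma Re_ip_gt0 (hH : is_hilbert ip) x : x != 0 -> 0 < complex.Re (ip x x).
Proof.
have := hH; case=> _ _ pos def _ => nx; have := pos x; have := def x.
case: (ip x x) => a b; rewrite lecE /= => d /andP[/eqP b0 a0].
rewrite lt_neqAle a0 andbT; apply/negP => /eqP a00.
by apply: (negP nx); apply/eqP; apply: d; rewrite b0 -a00.
Qed.


Lemma ReD (a b : R[i]) : complex.Re (a + b) = complex.Re a + complex.Re b.
Proof. by case: a; case: b. Qed.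

Lemma lin0 (T : H -> H) : (forall a x y, T (a *: x + y) = a *: T x + T y) -> T 0 = 0.
Proof.
move=> lin; have := lin 1 0 0; rewrite !scale1r addr0 => e.
by have := congr1 (fun t => t - T 0) e; rewrite subrr addrK.
Qed.

Lemma proj_contract (hH : is_hilbert ip) (Q S : H -> H)
  (linQ : forall a x y, Q (a *: x + y) = a *: Q x + Q y)
  (linS : forall a x y, S (a *: x + y) = a *: S x + S y)
  (QQ : forall x, Q (Q x) = Q x)
  (adj : forall u v, ip (S u) v = ip u (Q v))
  (comm : forall x, S (Q x) = Q (S x)) x :
  complex.Re (ip (Q x) (Q x)) <= complex.Re (ip x x).
Proof.
have := hH; case=> lin sym pos def _.
set z := (-1) *: Q x + x.
have Qz : Q z = 0 by rewrite /z linQ QQ scaleN1r addNr.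
have Sz : S z = 0.
  apply: def; rewrite adj -comm Qz (@lin0 S linS) ip0r //.
have o1 : ip z (Q x) = 0 by rewrite -adj Sz ip0l.
have o2 : ip (Q x) z = 0 by rewrite sym o1 conjC0.
have e : Q x + z = x by rewrite /z scaleN1r addNKr.
clearbody z.
have ipDl u v w : ip (u + v) w = ip u w + ip v w.
  by rewrite -[u]scale1r lin mul1r scale1r.
have ex : ip x x = ip (Q x) (Q x) + ip z z.
  by rewrite -{1 2}e !ipDl !ipDr // o1 o2 addr0 add0r.
by rewrite ex ReD lerDl Re_ip_ge0.
Qed.


Lemma hnorm2_0 (hH : is_hilbert ip) : hnorm2 ip 0 = 0.
Proof. by rewrite /hnorm2 ip0l. Qed.

Lemma hnorm2Z (hH : is_hilbert ip) (r : R) y :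
  hnorm2 ip ((r%:C)%C *: y) = r ^+ 2 * hnorm2 ip y.
Proof.
have cr : ((r%:C)%C)^* = (r%:C)%C := conjc_real r.
rewrite /hnorm2 ipZl // ipZr // cr.
by case: (ip y y) => a b /=; rewrite !mul0r !subr0 expr2 mulrA.
Qed.

Lemma sup_ge (E : set R) x : E x -> (exists M, forall y, E y -> y <= M) -> x <= sup E.
Proof. by move=> Ex [M hM]; apply: (ub_le_sup (E := E)) => //; exists M. Qed.

Lemma sup_ge0 (E : set R) x : E x -> 0 <= x -> 0 <= sup E.
Proof.
move=> Ex x0; case: (pselect (has_sup E)) => [h|h]; last by rewrite sup_out.
by apply: le_trans x0 _; apply: sup_upper_bound.
Qed.

Lemma mul_le_abs (M t : R) : 0 <= t -> t <= 1 -> M * t <= `|M|.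
Proof.
move=> t0 t1; apply: le_trans (ler_wpM2r t0 (ler_norm M)) _.
by rewrite ler_piMr.
Qed.

Lemma op_norm_ge0 (hH : is_hilbert ip) T : 0 <= op_norm ip T.
Proof.
apply: (@sup_ge0 _ (Num.sqrt (\sum_(i < 1) hnorm2 ip (\sum_(j < 1) T ((fun _ => 0) j))))).
  by exists (fun _ => 0) => //=; rewrite big_ord1 hnorm2_0.
exact: sqrtr_ge0.
Qed.

Lemma op_norm_le1 (hH : is_hilbert ip) T :
  (forall x, hnorm2 ip (T x) <= hnorm2 ip x) -> op_norm ip T <= 1.
Proof.
move=> hT; apply: ge_sup.
  exists (Num.sqrt (\sum_(i < 1) hnorm2 ip (\sum_(j < 1) T ((fun _ => 0) j)))).
  by exists (fun _ => 0) => //=; rewrite big_ord1 hnorm2_0.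
move=> y [x /= hx <-]; rewrite -sqrtr1 ler_wsqrtr //.
rewrite !big_ord1 in hx *; exact: le_trans (hT _) hx.
Qed.

Lemma op_norm_ub (hH : is_hilbert ip) T M :
  (forall x, hnorm ip (T x) <= M * hnorm ip x) ->
  exists M', forall y, [set Num.sqrt (\sum_(i < 1) hnorm2 ip (\sum_(j < 1) (fun _ _ : 'I_1 => T) i j (x j)))
      | x in [set x : 'I_1 -> H | \sum_(j < 1) hnorm2 ip (x j) <= 1]] y -> y <= M'.
Proof.
move=> hT; exists `|M|; move=> y [x /= hx <-]; rewrite !big_ord1 in hx *.
apply: le_trans (hT _) _; apply: mul_le_abs; first exact: sqrtr_ge0.
by rewrite -sqrtr1 ler_wsqrtr.
Qed.


Lemma op_norm_ge1 (hH : is_hilbert ip) T M y :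
  (forall a x z, T (a *: x + z) = a *: T x + T z) ->
  (forall x, hnorm ip (T x) <= M * hnorm ip x) ->
  y != 0 -> T y = y -> 1 <= op_norm ip T.
Proof.
move=> linT hT y0 Ty.
have p : 0 < hnorm2 ip y by exact: Re_ip_gt0.
set r := (hnorm ip y)^-1.
have e1 : hnorm2 ip ((r%:C)%C *: y) = 1.
  rewrite hnorm2Z // /r /hnorm exprVn sqr_sqrtr ?ltW // mulVf //.
  by rewrite gt_eqF.
have eT : T ((r%:C)%C *: y) = (r%:C)%C *: y.
  by rewrite -{1}[_ *: y]addr0 linT (@lin0 T linT) addr0 Ty.
apply: sup_ge; last exact: op_norm_ub hT.
exists (fun _ => (r%:C)%C *: y); first by rewrite /= big_ord1 e1.
by rewrite /= !big_ord1 eT e1 sqrtr1.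
Qed.
End Hil.

Section MX.
Variable R : realType.
Local Notation C := R[i].

Lemma ord2_cases (i : 'I_2) : i = ord0 \/ i = ord_max.
Proof. by case: i => [[|[|//]]] hi; [left|right]; apply: val_inj. Qed.

Lemma lift01 : lift ord0 (ord0 : 'I_1) = ord_max :> 'I_2.
Proof. by apply: val_inj. Qed.

Lemma om0 : (ord_max == ord0 :> 'I_2) = false. Proof. by []. Qed.

Lemma Vc_comm (c : C) a b : Vc c a -> Vc c b -> a * b = b * a.
Proof.
move=> [a10 a11] [b10 b11]; apply/matrixP => i j.
rewrite !mxE !big_ord_recl !big_ord0 !lift01.
by case: (ord2_cases i) => ->; case: (ord2_cases j) => ->;
  rewrite ?a10 ?b10 ?a11 ?b11 /=; ring.
Qed.

Definition Pm (c : C) : 'M[C]_2 :=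
  \matrix_(i, j) (if j == ord0 then 0 else if i == ord0 then c^-1 else 1).

Lemma Pm_ut c : upper_tri (Pm c).
Proof. by rewrite /upper_tri /= mxE eqxx. Qed.

Lemma Pm_Vc c : c != 0 -> Vc c (Pm c).
Proof. by move=> c0; split; rewrite !mxE ?eqxx ?om0 ?add0r ?mulfV. Qed.

Lemma Pm_idem c : Pm c * Pm c = Pm c.
Proof.
apply/matrixP => i j; rewrite !mxE !big_ord_recl !big_ord0 !lift01 !mxE /=.
by case: (ord2_cases i) => ->; case: (ord2_cases j) => ->; rewrite ?mxE ?eqxx ?om0; ring.
Qed.


Lemma vnorm2E (v : 'cV[C]_2) :
  vnorm2 v = Normc.normc (v ord0 0) ^+ 2 + Normc.normc (v ord_max 0) ^+ 2.
Proof. by rewrite /vnorm2 !big_ord_recl big_ord0 lift01 addr0. Qed.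

Lemma vnorm2_ge0 (v : 'cV[C]_2) : 0 <= vnorm2 v.
Proof. by rewrite vnorm2E addr_ge0 // sqr_ge0. Qed.

Lemma vnorm2_0 : vnorm2 (0 : 'cV[C]_2) = 0.
Proof. by rewrite vnorm2E !mxE Normc.normc0 expr0n /= addr0. Qed.

Lemma mx2_norm_ge0 (a : 'M[C]_2) : 0 <= mx2_norm a.
Proof.
apply: (@sup_ge0 _ _ (Num.sqrt (\sum_(i < 1) vnorm2 (\sum_(j < 1) (fun _ _ : 'I_1 => a) i j *m (fun _ => 0) j)))).
  by exists (fun _ => 0) => //=; rewrite big_ord1 vnorm2_0.
exact: sqrtr_ge0.
Qed.

Lemma mx2_norm1 : mx2_norm (1 : 'M[C]_2) <= 1.
Proof.
apply: ge_sup.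
  exists (Num.sqrt (\sum_(i < 1) vnorm2 (\sum_(j < 1) (fun _ _ : 'I_1 => (1 : 'M[C]_2)) i j *m (fun _ => 0) j))).
  by exists (fun _ => 0) => //=; rewrite big_ord1 vnorm2_0.
move=> y [x /= hx <-]; rewrite -sqrtr1 ler_wsqrtr //.
by rewrite !big_ord1 mul1mx in hx *.
Qed.

Lemma mx2_norm_Pm c : c != 0 -> (Normc.normc c)^-1 <= mx2_norm (Pm c).
Proof.
move=> c0.
have PmE v : vnorm2 (Pm c *m v) =
    (Normc.normc c^-1 * Normc.normc (v ord_max 0)) ^+ 2 + Normc.normc (v ord_max 0) ^+ 2.
  rewrite vnorm2E !mxE !big_ord_recl !big_ord0 !lift01 !mxE !eqxx !om0 !mul0r !add0r !addr0 mul1r.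
  by rewrite Normc.normcM.
set n := Normc.normc c^-1.
have n0 : 0 <= n by rewrite /n /Normc.normc; case: (c^-1) => *; exact: sqrtr_ge0.
pose e : 'cV[C]_2 := \matrix_(k, l) (if k == ord0 then 0 else 1).
apply: (@le_trans _ _ (Num.sqrt (n ^+ 2 + 1))).
  rewrite -Normc.normcV -/n -{1}[n]ger0_norm // -sqrtr_sqr ler_wsqrtr //.
  by rewrite lerDl.
apply: sup_ge.
  exists (fun _ => e) => /=.
    by rewrite big_ord1 vnorm2E !mxE eqxx om0 Normc.normc0 Normc.normc1 expr0n /= add0r expr1n.
  by rewrite !big_ord1 PmE /e !mxE om0 Normc.normc1 mulr1 expr1n.
exists (Num.sqrt (n ^+ 2 + 1)) => y [v /= hv <-].
rewrite !big_ord1 PmE in hv *; rewrite vnorm2E in hv; rewrite ler_wsqrtr //.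
set m := Normc.normc (v ord0 ord_max 0) in hv *.
have m1 : m ^+ 2 <= 1.
  by apply: le_trans hv; rewrite lerDr sqr_ge0.
rewrite exprMn -/n; have h := ler_wpM2l (sqr_ge0 n) m1; rewrite mulr1 in h; lra.
Qed.
End MX.

Theorem lemma2 (R : realType) (c : R[i]) (H : lmodType R[i]) (ip : H -> H -> R[i])
  (phi : 'M[R[i]]_2 -> H -> H) :
  c != 0 -> is_hilbert ip -> in_Phi ip phi -> A_phi ip phi = Vc c ->
  hom_norm ip phi * hom_inv_norm ip phi >= 1 / Normc.normc c.
Proof.
move=> c0 hH [[bnd linphi mulphi inj] [Mc hc] [Mi hi]] hA.
have hH' := hH; case: hH' => lin sym _ _ _.
set P := Pm c.
have uP : upper_tri P := Pm_ut c.
have VP : Vc c P := Pm_Vc c0.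
have AP : A_phi ip phi P by rewrite hA.
case: AP => _ [_ [S [b ub Sb] adjS]]; subst S.
have Ab : A_phi ip phi b.
  split; first exact: ub; split; first by exists b.
  exists (phi P); first by exists P.
  by move=> x y; rewrite [LHS]sym [RHS]sym adjS.
have Vb : Vc c b by rewrite -hA.
have [linP _] := bnd P uP.
have [linb _] := bnd b ub.
have QQ x : phi P (phi P x) = phi P x by rewrite -mulphi // Pm_idem.
have comm x : phi b (phi P x) = phi P (phi b x).
  by rewrite -!mulphi // (Vc_comm Vb VP).
have contr x : hnorm2 ip (phi P x) <= hnorm2 ip x.
  exact: (proj_contract hH linP linb QQ adjS comm x).
have opP : op_norm ip (phi P) <= 1 := op_norm_le1 hH contr.
have h2 : mx2_norm P <= hom_inv_norm ip phi.
  apply: sup_ge; first by exists P.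
  exists `|Mi| => y [a [ua oa] <-].
  have h : mx2_norm a <= Mi * op_norm ip (phi a) := hi 1 (fun _ _ => a) (fun _ _ => ua).
  by apply: le_trans h _; apply: mul_le_abs => //; exact: op_norm_ge0.
have u1 : upper_tri (1 : 'M[R[i]]_2) by rewrite /upper_tri /= mxE.
have h1 : op_norm ip (phi 1) <= hom_norm ip phi.
  apply: sup_ge; first by exists 1 => //; split => //; exact: mx2_norm1.
  exists `|Mc| => y [a [ua oa] <-].
  have h : op_norm ip (phi a) <= Mc * mx2_norm a := hc 1 (fun _ _ => a) (fun _ _ => ua).
  by apply: le_trans h _; apply: mul_le_abs => //; exact: mx2_norm_ge0.
have u0 : upper_tri (0 : 'M[R[i]]_2) by rewrite /upper_tri /= mxE.
have phi0 x : phi 0 x = 0.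
  have := linphi 1 0 0 u0 u0 x.
  rewrite scale1r addr0 scale1r => e.
  by have := congr1 (fun t => t - phi 0 x) e; rewrite subrr addrK.
have [x Jx] : exists x, phi 1 x != 0.
  case: (pselect (exists x, phi 1 x != 0)) => // nx; exfalso.
  have e : phi 1 = phi 0.
    apply: funext => x; rewrite phi0; apply/eqP; apply/negPn/negP => h.
    by apply: nx; exists x.
  have := inj 1 0 u1 u0 e; apply/eqP; exact: oner_neq0.
have [lin1 [M1 b1]] := bnd 1 u1.
have J1 : 1 <= op_norm ip (phi 1).
  apply: (op_norm_ge1 hH lin1 b1 Jx).
  by rewrite -mulphi // mulr1.
have nc : 0 < Normc.normc c.
  rewrite lt_neqAle; apply/andP; split.
    by apply/eqP => e; move: c0; rewrite (Normc.eq0_normc (esym e)) eqxx.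
  by rewrite /Normc.normc; case: (c) => *; exact: sqrtr_ge0.
have h3 := mx2_norm_Pm c0.
rewrite div1r.
have hv : 0 <= (Normc.normc c)^-1 by rewrite invr_ge0 ltW.
nra.
Qed.
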